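(* There is an algorithm which, given integers $m\ge 2$ and $n_1>n_2>\dots>n_m\ge 0$ and reals $\phi>0$, $\mu>0$, $q\in[0,1]$, outputs numbers $(u_i,v_i)_{i\in[m]}$ realized by a pure strategy profile that maximizes the total traffic rate $TR$, and runs in time $O(mn^2)$, where $n=\sum_{i=1}^m n_i$.
   Context: Network model: there are $m$ source nodes $s_1,\dots,s_m$ and one destination $d$. Source $s_i$ has a set $N_i$ of $n_i$ users; $n=\sum_i n_i$. Each user generates an independent Poisson flow of packets of rate $\phi>0$; each direct link $(s_i,d)$ has service rate $\mu>0$; each sidelink $(s_i,s_j)$ loses packets independently with probability $q\in[0,1]$, and $\bar q=1-q$. A pure strategy of a user in $N_i$ is a route: either the direct path (DP) $(s_i,d)$ or an indirect path (IP) $(s_i,s_j,d)$ for some $j\neq i$. For a pure strategy profile $\mathbf p$, $u_i$ is the number of users of $N_i$ choosing DP and $v_i$ is the number of users of other sources choosing an IP $(s_j,s_i,d)$, $j\ne i$. The traffic rate on link $(s_i,d)$ is $T_i=u_i\phi+v_i\bar q\phi$, and the total traffic rate is $TR(\mathbf p)=\sum_{i=1}^m \frac{\mu T_i}{T_i+\mu}$. An optimal solution is a pure strategy profile maximizing $TR$. *)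

(* Defs.v *)
From HB Require Import structures.
From mathcomp Require Import all_boot all_order all_algebra.
Set Implicit Arguments.
Unset Strict Implicit.
Unset Printing Implicit Defensive.
Import Order.TTheory GRing.Theory Num.Theory.
Local Open Scope ring_scope.

(* Network model.  Sources are indexed by 'I_m (source s_{i+1} is i),  *)
(* users of source i by 'I_(ns i).  A route of a user of source i is   *)
(* encoded by an index j : 'I_m : j = i means the direct path (s_i,d), *)
(* j <> i means the indirect path (s_i, s_j, d).                       *)
Section Network.
Variables (R : realFieldType) (m : nat) (ns : 'I_m -> nat) (phi mu q : R).

Definition profile := forall i : 'I_m, 'I_(ns i) -> 'I_m.

Definition uu (p : profile) (i : 'I_m) : nat :=
  #|[pred k : 'I_(ns i) | p i k == i]|.

Definition vv (p : profile) (i : 'I_m) : nat :=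
  (\sum_(j < m | j != i) #|[pred k : 'I_(ns j) | p j k == i]|)%N.

Definition traffic (p : profile) (i : 'I_m) : R :=
  (uu p i)%:R * phi + (vv p i)%:R * (1 - q) * phi.

Definition TR (p : profile) : R :=
  \sum_(i < m) (mu * traffic p i / (traffic p i + mu)).

Definition optimal (p : profile) : Prop := forall p' : profile, TR p' <= TR p.

End Network.

(* Cost model: a real-RAM.  Two memories of registers indexed by nat:  *)
(* natural-number registers and real registers; indirect addressing;   *)
(* unit cost per executed instruction.                                 *)
Inductive instr : Type :=
| INConst (d k : nat)
| INAdd (d a b : nat)
| INSub (d a b : nat)          (* N[d] := N[a] - N[b] (trunc.) *)
| INMul (d a b : nat)
| INDiv (d a b : nat)
| INLoad (d a : nat)
| INStore (a s : nat)
| IRofN (d a : nat)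
| IRAdd (d a b : nat)
| IRSub (d a b : nat)
| IRMul (d a b : nat)
| IRDiv (d a b : nat)
| IRLoad (d a : nat)
| IRStore (a s : nat)
| IJmp (t : nat)
| IJltN (a b t : nat)
| IJltR (a b t : nat)
| IHalt.

Section Machine.
Variable R : realFieldType.

Record state := State { pc : nat; nmem : nat -> nat; rmem : nat -> R }.

Definition updN (f : nat -> nat) (d v : nat) : nat -> nat :=
  fun k => if k == d then v else f k.
Definition updR (f : nat -> R) (d : nat) (v : R) : nat -> R :=
  fun k => if k == d then v else f k.

(* One step; None when the machine has halted (Halt or pc out of range). *)
Definition step (P : seq instr) (s : state) : option state :=
  let N := nmem s in let Rm := rmem s in let nx := (pc s).+1 in
  match nth IHalt P (pc s) with
  | INConst d k => Some (State nx (updN N d k) Rm)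
  | INAdd d a b => Some (State nx (updN N d (N a + N b)%N) Rm)
  | INSub d a b => Some (State nx (updN N d (N a - N b)%N) Rm)
  | INMul d a b => Some (State nx (updN N d (N a * N b)%N) Rm)
  | INDiv d a b => Some (State nx (updN N d (N a %/ N b)%N) Rm)
  | INLoad d a => Some (State nx (updN N d (N (N a))) Rm)
  | INStore a s0 => Some (State nx (updN N (N a) (N s0)) Rm)
  | IRofN d a => Some (State nx N (updR Rm d (N a)%:R))
  | IRAdd d a b => Some (State nx N (updR Rm d (Rm a + Rm b)))
  | IRSub d a b => Some (State nx N (updR Rm d (Rm a - Rm b)))
  | IRMul d a b => Some (State nx N (updR Rm d (Rm a * Rm b)))
  | IRDiv d a b => Some (State nx N (updR Rm d (Rm a / Rm b)))
  | IRLoad d a => Some (State nx N (updR Rm d (Rm (N a))))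
  | IRStore a s0 => Some (State nx N (updR Rm (N a) (Rm s0)))
  | IJmp t => Some (State t N Rm)
  | IJltN a b t => Some (State (if (N a < N b)%N then t else nx) N Rm)
  | IJltR a b t => Some (State (if Rm a < Rm b then t else nx) N Rm)
  | IHalt => None
  end.

(* exec P k s = Some s' iff P started in s halts within at most k steps,
   in final state s'. *)
Fixpoint exec (P : seq instr) (fuel : nat) (s : state) : option state :=
  match step P s with
  | None => Some s
  | Some s' => match fuel with 0 => None | f.+1 => exec P f s' end
  end.

End Machine.

(* Input encoding: N[0] = m, N[1+i] = n_{i+1} (i < m), all other N cells 0;
   R[0] = phi, R[1] = mu, R[2] = q, all other R cells 0; pc = 0. *)
Definition init_nmem (m : nat) (ns : 'I_m -> nat) (k : nat) : nat :=
  if k == 0%N then m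
  else match (insub k.-1 : option 'I_m) with Some i => ns i | None => 0%N end.

Definition init_rmem (R : realFieldType) (phi mu q : R) (k : nat) : R :=
  if k == 0%N then phi else if k == 1%N then mu else if k == 2%N then q else 0.

Definition init_state (R : realFieldType) (m : nat) (ns : 'I_m -> nat)
  (phi mu q : R) : state R :=
  State 0 (init_nmem ns) (init_rmem phi mu q).

(* Main.v *)
Require Import Defs.
From HB Require Import structures.
From mathcomp Require Import all_boot all_order all_algebra.
From mathcomp Require Import ring lra zify.
Import Order.TTheory GRing.Theory Num.Theory.
Local Open Scope ring_scope.
Set Implicit Arguments.
Unset Strict Implicit.
Unset Printing Implicit Defensive.
Section Prof.
Variables (m : nat) (ns : 'I_m -> nat).

Lemma uu_le (p : profile ns) i : (uu p i <= ns i)%N.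
Proof. by rewrite /uu; have := max_card [pred k : 'I_(ns i) | p i k == i]; rewrite card_ord. Qed.

Lemma card_part (p : profile ns) j :
  (\sum_(i < m) #|[pred k : 'I_(ns j) | p j k == i]|)%N = ns j.
Proof.
rewrite -[RHS]card_ord -sum1_card (partition_big (p j) predT) //=.
apply: eq_bigr => i _; rewrite -sum1_card; apply: eq_bigl => k.
by rewrite !inE.
Qed.

Lemma uv_sum (p : profile ns) i :
  (uu p i + vv p i = \sum_(j < m) #|[pred k : 'I_(ns j) | p j k == i]|)%N.
Proof. by rewrite (bigD1 i). Qed.

Lemma sum_uv (p : profile ns) : (\sum_i (uu p i + vv p i) = \sum_i ns i)%N.
Proof.
under eq_bigr do rewrite uv_sum.
rewrite exchange_big; apply: eq_bigr => j _; exact: card_part.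
Qed.

Lemma realize S : forall (U V : 'I_m -> nat),
  (\sum_i V i = S)%N -> (forall i, U i <= ns i)%N ->
  (forall i, U i < ns i -> V i = 0)%N -> (\sum_i (ns i - U i) = S)%N ->
  exists p : profile ns, forall i, uu p i = U i /\ vv p i = V i.
Proof.
elim: S => [|S IH] U V sV hU hUV sU.
- have V0 : forall i, V i = 0%N.
    by move=> i; move/eqP: sV; rewrite sum_nat_eq0 => /forallP /(_ i) /eqP.
  have U0 : forall i, U i = ns i.
    move=> i; move/eqP: sU; rewrite sum_nat_eq0 => /forallP /(_ i) /eqP.
    by have := hU i; lia.
  exists (fun i _ => i) => i; split.
  + rewrite /uu U0 -[RHS]card_ord; apply: eq_card => k; by rewrite !inE eqxx.
  + rewrite /vv V0; apply: big1 => j ji; apply: eq_card0 => k.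
    by rewrite !inE (negbTE ji).
- case: (pickP (fun j => 0 < V j)%N) => [j Vj | H]; last first.
    have : (\sum_i V i = 0)%N by apply: big1 => i _; have := H i; rewrite /=; lia.
    by rewrite sV.
  case: (pickP (fun i => U i < ns i)%N) => [i Ui | H]; last first.
    have : (\sum_i (ns i - U i) = 0)%N.
      by apply: big1 => a _; have := H a; rewrite /=; lia.
    by rewrite sU.
  have ij : i != j by apply/eqP => E; move: Vj; rewrite -E hUV.
  pose U' := fun a => if a == i then (U i).+1 else U a.
  pose V' := fun a => if a == j then (V j).-1 else V a.
  have [p' Hp'] : exists p' : profile ns, forall a, uu p' a = U' a /\ vv p' a = V' a.
    apply: IH.
    + move: sV; rewrite (bigD1 j) // [in X in _ -> X](bigD1 j) //= /V' eqxx.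
      under [in X in _ -> X]eq_bigr => a aj do rewrite (negbTE aj).
      move: Vj => /=; lia.
    + move=> a; rewrite /U'; case: eqP => [->|_]; [exact: Ui | exact: hU].
    + move=> a; rewrite /U' /V'; case: eqP => [->|ai].
      * by rewrite (negbTE ij) => _; apply: hUV.
      * case: eqP => [->|_ h]; last exact: hUV.
        by move=> h; move: Vj; rewrite /= hUV.
    + move: sU; rewrite (bigD1 i) // [in X in _ -> X](bigD1 i) //= /U' eqxx.
      under [in X in _ -> X]eq_bigr => a ai do rewrite (negbTE ai).
      move: Ui => /=; lia.
  have [k pk] : exists k : 'I_(ns i), p' i k == i.
    have : (0 < uu p' i)%N by rewrite (proj1 (Hp' i)) /U' eqxx.
    by move/card_gt0P => [k]; rewrite inE => pk; exists k.
  pose p : profile ns := fun a k0 => if (a == i) && (val k0 == val k) then j else p' a k0.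
  have pother : forall a k0, a != i -> p a k0 = p' a k0.
    by move=> a k0 ai; rewrite /p (negbTE ai).
  have vk : forall k0 : 'I_(ns i), (val k0 == val k) = (k0 == k) by [].
  exists p => a; split.
  + case: (eqVneq a i) => [->|ai].
    * have := proj1 (Hp' i); rewrite /U' eqxx /uu (cardD1 k) inE pk => /eqP.
      rewrite add1n eqSS => /eqP <-; apply: eq_card => k0; rewrite !inE /p eqxx /= vk.
      case: (eqVneq k0 k) => [->|nk]; last by [].
      by rewrite eq_sym (negbTE ij).
    * have := proj1 (Hp' a); rewrite /U' (negbTE ai) => <-.
      by apply: eq_card => k0; rewrite !inE pother.
  + case: (eqVneq a i) => [->|ai].
    * have := proj2 (Hp' i); rewrite /V' (negbTE ij) => <-.
      rewrite /vv; apply: eq_bigr => b bi; apply: eq_card => k0.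
      by rewrite !inE pother.
    have termi : #|[pred k0 : 'I_(ns i) | p i k0 == a]| =
                 (#|[pred k0 : 'I_(ns i) | p' i k0 == a]| + (a == j))%N.
      case: (eqVneq a j) => [->|aj].
      - rewrite (cardD1 k) inE /p eqxx vk eqxx /= eqxx add1n addn1; apply/eqP; rewrite eqSS; apply/eqP.
        apply: eq_card => k0; rewrite !inE /p ?eqxx ?vk /=.
        case: (eqVneq k0 k) => [->|nk] /=; last by [].
        by rewrite (eqP pk) (negbTE ij).
      - rewrite addn0; apply: eq_card => k0; rewrite !inE /p ?eqxx ?vk /=.
        case: (eqVneq k0 k) => [->|nk] /=; last by [].
        by rewrite (eqP pk) eq_sym (negbTE aj) eq_sym (negbTE ai).
    have rest : (\sum_(b < m | b != a) #|[pred k0 : 'I_(ns b) | p b k0 == a]|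
       = #|[pred k0 : 'I_(ns i) | p i k0 == a]| +
         \sum_(b < m | (b != a) && (b != i)) #|[pred k0 : 'I_(ns b) | p' b k0 == a]|)%N.
      rewrite (bigD1 i) /=; last by rewrite eq_sym.
      congr (_ + _)%N; apply: eq_bigr => b /andP [_ bi]; apply: eq_card => k0.
      by rewrite !inE pother.
    have rest' : (\sum_(b < m | b != a) #|[pred k0 : 'I_(ns b) | p' b k0 == a]|
       = #|[pred k0 : 'I_(ns i) | p' i k0 == a]| +
         \sum_(b < m | (b != a) && (b != i)) #|[pred k0 : 'I_(ns b) | p' b k0 == a]|)%N.
      by rewrite (bigD1 i) /=; last by rewrite eq_sym.
    have := proj2 (Hp' a); rewrite /vv rest rest' termi /V' => h.
    case: (eqVneq a j) h => [->|aj] /=; last by rewrite addn0.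
    move=> h; have := Vj; rewrite /=; lia.
Qed.
End Prof.
Section Math.
Variables (R : realFieldType) (m : nat) (ns : 'I_m -> nat) (phi mu q : R).
Hypotheses (phi_gt0 : 0 < phi) (mu_gt0 : 0 < mu) (q_ge0 : 0 <= q) (q_le1 : q <= 1).
Ltac hyps := have := phi_gt0; have := mu_gt0; have := q_ge0; have := q_le1; move=> ????.

Definition nsN (k : nat) : nat := if insub k is Some i then ns i else 0%N.
Definition qb : R := 1 - q.
Definition fM (T : R) : R := mu * T / (T + mu).
Definition Tm (U V : nat) : R := phi * (U%:R + V%:R * qb).
Definition gainM (U V n : nat) : R :=
  let T := Tm U V in
  let T' := if U%:R < n%:R :> R then T + phi else T + phi * qb in
  fM T' - fM T.
Definition TT k y := Tm (minn y (nsN k)) (y - nsN k).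
Definition hN k y := fM (TT k y).
Definition dN k y := gainM (minn y (nsN k)) (y - nsN k) (nsN k).
Definition sN k y : R := if (y < nsN k)%N then phi else phi * qb.

Lemma qb_ge0 : 0 <= qb. Proof. rewrite /qb; hyps; lra. Qed.
Lemma qb_le1 : qb <= 1. Proof. rewrite /qb; hyps; lra. Qed.

Lemma TT_ge0 k y : 0 <= TT k y.
Proof.
rewrite /TT /Tm; apply: mulr_ge0; first exact: ltW.
apply: addr_ge0; first exact: ler0n.
apply: mulr_ge0; [exact: ler0n | exact: qb_ge0].
Qed.

Lemma sN_ge0 k y : 0 <= sN k y.
Proof.
rewrite /sN; case: ifP => _; first exact: ltW.
apply: mulr_ge0; [exact: ltW | exact: qb_ge0].
Qed.

Lemma sN_anti k y : sN k y.+1 <= sN k y.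
Proof.
rewrite /sN; case: ifP => h1; case: ifP => h2 //.
- by move: h1 h2; lia.
- hyps; have := qb_le1; have := qb_ge0; nra.
Qed.

Lemma TT_succ k y : TT k y.+1 = TT k y + sN k y.
Proof.
rewrite /TT /Tm /sN; case: ifP => h.
- have -> : minn y.+1 (nsN k) = y.+1 by lia.
  have -> : minn y (nsN k) = y by lia.
  have -> : (y.+1 - nsN k = 0)%N by lia.
  have -> : (y - nsN k = 0)%N by lia.
  rewrite -natr1; ring.
- have -> : minn y.+1 (nsN k) = nsN k by lia.
  have -> : minn y (nsN k) = nsN k by lia.
  have -> : (y.+1 - nsN k = (y - nsN k).+1)%N by lia.
  rewrite -natr1; ring.
Qed.

Lemma dN_eq k y : dN k y = fM (TT k y + sN k y) - fM (TT k y).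
Proof.
rewrite /dN /gainM /TT /sN ltr_nat.
have -> : (minn y (nsN k) < nsN k)%N = (y < nsN k)%N by lia.
by case: ifP.
Qed.

Lemma dN_eq2 k y : dN k y = hN k y.+1 - hN k y.
Proof. by rewrite dN_eq /hN TT_succ. Qed.

Lemma fdiff a s : 0 <= a -> 0 <= s ->
  fM (a + s) - fM a = mu * mu * s / ((a + mu) * (a + s + mu)).
Proof.
move=> a0 s0; rewrite /fM; hyps.
have h1 : a + mu != 0 by rewrite lt0r_neq0 //; lra.
have h2 : a + s + mu != 0 by rewrite lt0r_neq0 //; lra.
by field; rewrite h1 h2.
Qed.

Lemma fdiff_le a b s s' : 0 <= a -> a <= b -> 0 <= s' -> s' <= s ->
  fM (b + s') - fM b <= fM (a + s) - fM a.
Proof.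
move=> a0 ab s'0 s's; hyps.
rewrite fdiff ?fdiff //; try lra.
have d1 : 0 < (a + mu) * (a + s + mu) by apply: mulr_gt0; lra.
have d2 : 0 < (b + mu) * (b + s' + mu) by apply: mulr_gt0; lra.
rewrite ler_pdivrMr // [X in _ <= X]mulrAC ler_pdivlMr //.
have e1 : s' * (a + s + mu) <= s * (b + s' + mu) by nra.
have e2 : 0 <= a + mu by lra.
have e3 : s' * (a + s + mu) * (a + mu) <= s * (b + s' + mu) * (b + mu).
  apply: (le_trans (y := s * (b + s' + mu) * (a + mu))).
    by apply: ler_wpM2r.
  apply: ler_wpM2l; [nra | lra].
have mm : 0 < mu * mu by nra.
have := ler_wpM2l (ltW mm) e3.
move=> h; apply: (le_trans _ (le_trans h _)); rewrite le_eqVlt; apply/orP; left; apply/eqP; ring.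
Qed.

Lemma dN_succ k y : dN k y.+1 <= dN k y.
Proof.
rewrite !dN_eq TT_succ; apply: fdiff_le.
- exact: TT_ge0.
- have := sN_ge0 k y; lra.
- exact: sN_ge0.
- exact: sN_anti.
Qed.

Lemma dN_anti k y z : (y <= z)%N -> dN k z <= dN k y.
Proof.
move=> /subnK <-; elim: (z - y)%N => [|d IH]; first by rewrite add0n.
by rewrite addSn; apply: le_trans IH; apply: dN_succ.
Qed.

Lemma hN_up k y z : (y <= z)%N -> hN k z - hN k y <= (z - y)%:R * dN k y.
Proof.
move=> /subnK <-; rewrite addnK; elim: (z - y)%N => [|d IH].
  by rewrite add0n subrr mul0r.
rewrite addSn -natr1 mulrDl mul1r.
have e := dN_eq2 k (d + y).
have f : dN k (d + y) <= dN k y by apply: dN_anti; lia.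
lra.
Qed.

Lemma hN_down0 k z d : (d.+1)%:R * dN k (z + d) <= hN k (z + d.+1) - hN k z.
Proof.
elim: d => [|d IH].
  by rewrite mul1r addn0 addn1 dN_eq2.
have e := dN_eq2 k (z + d.+1).
have f : dN k (z + d.+1) <= dN k (z + d) by rewrite addnS; apply: dN_succ.
rewrite -(natr1 d.+1) mulrDl mul1r.
have g : 0 <= (d.+1)%:R :> R by exact: ler0n.
have h : (d.+1)%:R * dN k (z + d.+1) <= (d.+1)%:R * dN k (z + d) by apply: ler_wpM2l.
rewrite !addnS in IH e f h *; lra.
Qed.

Lemma hN_down k y z : (z < y)%N -> (y - z)%:R * dN k y.-1 <= hN k y - hN k z.
Proof.
move=> lt; have := hN_down0 k z (y - z).-1.
have -> : (z + (y - z).-1 = y.-1)%N by lia.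
have -> : (z + (y - z).-1.+1 = y)%N by lia.
by have -> : ((y - z).-1.+1 = y - z)%N by lia.
Qed.


Lemma greedy_opt (x y : nat -> nat) : (0 < m)%N ->
  (\sum_(i < m) x i = \sum_(i < m) y i)%N ->
  (forall i j : 'I_m, (0 < x i)%N -> dN j (x j) <= dN i (x i).-1) ->
  \sum_(i < m) hN i (y i) <= \sum_(i < m) hN i (x i).
Proof.
move=> m0 sxy GI.
pose i0 : 'I_m := Ordinal m0.
case: (@arg_maxP _ _ _ i0 predT (fun j : 'I_m => dN j (x j))) => // j _ Hj.
set lam := dN j (x j) in Hj.
have key : forall i : 'I_m, hN i (y i) - hN i (x i) <= lam * ((y i)%:R - (x i)%:R).
  move=> i.
  case: (leqP (x i) (y i)) => h.
  - have := hN_up i h; rewrite natrB //.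
    have := Hj i isT; have : 0 <= (y i)%:R - (x i)%:R :> R by rewrite subr_ge0 ler_nat.
    move=> p1 p2 p3; apply: le_trans p3 _; rewrite mulrC; exact: ler_wpM2r.
  - have := hN_down i h; rewrite natrB; last exact: ltnW.
    have p0 : (0 < x i)%N by lia.
    have := GI i j p0.
    have : 0 <= (x i)%:R - (y i)%:R :> R by rewrite subr_ge0 ler_nat ltnW.
    move=> p1 p2 p3.
    have p4 : ((x i)%:R - (y i)%:R) * lam <= ((x i)%:R - (y i)%:R) * dN i (x i).-1 by apply: ler_wpM2l.
    nra.
have := @ler_sum _ 'I_m (index_enum 'I_m) predT _ _ (fun i _ => key i).
rewrite sumrB -mulr_sumr sumrB -!natr_sum sxy subrr mulr0.
by rewrite subr_le0.
Qed.

Lemma nsN_val (i : 'I_m) : nsN (val i) = ns i.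
Proof. by rewrite /nsN valK. Qed.

Lemma fM_mono a b : 0 <= a -> a <= b -> fM a <= fM b.
Proof.
move=> a0 ab; have := fdiff a0 (s := b - a); rewrite subr_ge0 => /(_ ab).
have -> : a + (b - a) = b by ring.
move=> e; rewrite -subr_ge0 e; hyps.
apply: divr_ge0; first by apply: mulr_ge0; [nra | lra].
apply: mulr_ge0; lra.
Qed.

Lemma traffic_ge0 (p : profile ns) i : 0 <= traffic phi q p i.
Proof.
rewrite /traffic; hyps; have := ler0n R (uu p i); have := ler0n R (vv p i).
move=> *; have : 0 <= 1 - q by lra.
move=> *; apply: addr_ge0; apply: mulr_ge0 => //; try apply: mulr_ge0 => //; lra.
Qed.

Lemma traffic_le (p : profile ns) i : traffic phi q p i <= TT (val i) (uu p i + vv p i).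
Proof.
rewrite /traffic /TT /Tm /qb nsN_val; hyps.
have hu := uu_le p i; move: hu.
set u := uu p i; set v := vv p i => hu.
have u0 := ler0n R u; have v0 := ler0n R v.
have hu' : u%:R <= (ns i)%:R :> R by rewrite ler_nat.
case: (leqP (u + v) (ns i)) => h.
- have -> : (u + v - ns i = 0)%N by lia.
  have := mulr_ge0 (mulr_ge0 v0 q_ge0) (ltW phi_gt0).
  rewrite natrD /= mul0r addr0; lra.
- rewrite natrB; last by lia.
  have : 0 <= (ns i)%:R - u%:R :> R by lra.
  move=> d0; have := mulr_ge0 (mulr_ge0 d0 q_ge0) (ltW phi_gt0).
  rewrite natrD; lra.
Qed.

Lemma TR_le (p : profile ns) : TR phi mu q p <= \sum_(i < m) hN i (uu p i + vv p i).
Proof.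
rewrite /TR /hN; apply: ler_sum => i _.
by apply: fM_mono; [exact: traffic_ge0 | exact: traffic_le].
Qed.

Lemma final_opt (x : nat -> nat) : (0 < m)%N ->
  (\sum_(i < m) x i = \sum_(i < m) ns i)%N ->
  (forall i j : 'I_m, (0 < x i)%N -> dN j (x j) <= dN i (x i).-1) ->
  exists p : profile ns, optimal phi mu q p /\
    forall i, uu p i = minn (x i) (ns i) /\ vv p i = (x i - ns i)%N.
Proof.
move=> m0 sx GI.
have sU : (\sum_(i < m) (ns i - minn (x i) (ns i)) = \sum_(i < m) (x i - ns i))%N.
  have e : (\sum_(i < m) (ns i - minn (x i) (ns i)) + \sum_(i < m) x i =
            \sum_(i < m) (x i - ns i) + \sum_(i < m) ns i)%N.
    by rewrite -!big_split /=; apply: eq_bigr => i _; lia.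
  move: e; rewrite sx; lia.
have [p Hp] := @realize m ns (\sum_(i < m) (x i - ns i))%N
  (fun i => minn (x i) (ns i)) (fun i => x i - ns i)%N erefl
  (fun i => geq_minr _ _) (fun i h => ltac:(move: h; lia)) sU.
exists p; split => // p'.
have hTR : TR phi mu q p = \sum_(i < m) hN i (x i).
  rewrite /TR /hN; apply: eq_bigr => i _; congr fM.
  rewrite /traffic /TT /Tm /qb nsN_val (proj1 (Hp i)) (proj2 (Hp i)); ring.
rewrite hTR; apply: le_trans (TR_le p') _.
pose y k := if insub k is Some i then (uu p' i + vv p' i)%N else 0%N.
have hy : forall i : 'I_m, y i = (uu p' i + vv p' i)%N by move=> i; rewrite /y valK.
have := @greedy_opt x y m0.
under [X in _ -> _ -> X <= _]eq_bigr do rewrite hy.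
apply => //; rewrite sx -(sum_uv p'); apply: eq_bigr => i _; by rewrite hy.
Qed.

End Math.

Definition prog : seq instr := [::
 (*0*) IRofN 3 1; IRofN 4 2; INConst 1 3; IJltN 0 1 12; INLoad 2 1;
 (*5*) IRofN 5 2; INConst 2 32; INMul 2 2 1; IRStore 2 5; INConst 2 1;
 (*10*) INAdd 1 1 2; IJmp 3; IRAdd 32 3 6; IRAdd 64 4 6; INConst 3 1;
 (*15*) IRofN 8 3; INConst 4 0; INConst 5 32; INConst 1 0; IRSub 16 8 2;
 (*20*) IRMul 17 0 16; IJltN 1 0 23; IJmp 29; INAdd 2 1 3; INMul 2 2 5;
 (*25*) IRLoad 9 2; IRAdd 7 7 9; INAdd 1 1 3; IJmp 21; IJltR 10 7 31;
 (*30*) IJmp 86; INConst 1 0; IJltN 1 0 34; IJmp 67; INAdd 2 0 1;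
 (*35*) INAdd 2 2 3; INMul 7 2 5; INAdd 2 2 0; INMul 8 2 5; INLoad 9 7;
 (*40*) INLoad 10 8; IRofN 12 9; IRofN 13 10; INAdd 2 1 3; INMul 2 2 5;
 (*45*) IRLoad 14 2; IRMul 18 13 16; IRAdd 18 12 18; IRMul 18 0 18; IJltR 12 14 52;
 (*50*) IRAdd 19 18 17; IJmp 53; IRAdd 19 18 0; IRAdd 20 19 1; IRMul 21 1 19;
 (*55*) IRDiv 21 21 20; IRAdd 20 18 1; IRMul 22 1 18; IRDiv 22 22 20; IRSub 23 21 22;
 (*60*) IJltN 1 3 63; IJltR 11 23 63; IJmp 65; INAdd 6 1 4; IRAdd 11 23 24;
 (*65*) INAdd 1 1 3; IJmp 32; INAdd 2 0 6; INAdd 2 2 3; INMul 7 2 5;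
 (*70*) INAdd 2 2 0; INMul 8 2 5; INLoad 9 7; IRofN 12 9; INAdd 2 6 3;
 (*75*) INMul 2 2 5; IRLoad 14 2; IJltR 12 14 82; INLoad 10 8; INAdd 10 10 3;
 (*80*) INStore 8 10; IJmp 84; INAdd 9 9 3; INStore 7 9; IRAdd 10 10 8;
 (*85*) IJmp 29; INAdd 1 0 3; INAdd 2 0 0; INAdd 0 2 1; IJltN 1 0 91;
 (*90*) IHalt; INConst 2 32; INMul 2 2 1; INLoad 2 2; INStore 1 2;
 (*95*) INConst 2 1; INAdd 1 1 2; IJmp 89].

Section Machine.
Variables (R : realFieldType) (m : nat) (ns : 'I_m -> nat) (phi mu q : R).

Fixpoint run (k : nat) (s : state R) : option (state R) :=
  if k is k'.+1 then (if step prog s is Some s' then run k' s' else None) else Some s.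

Lemma run_S k s : run k.+1 s = if step prog s is Some s' then run k s' else None.
Proof. by []. Qed.

Lemma run_0 s : run 0 s = Some s.
Proof. by []. Qed.

Arguments run : simpl never.

Lemma run_add k1 k2 s : run (k1 + k2) s = obind (run k2) (run k1 s).
Proof.
elim: k1 s => [|k IH] s //=.
rewrite !run_S; by case: (step prog s) => //.
Qed.

Lemma exec_run k s s' f : run k s = Some s' -> step prog s' = None -> (k <= f)%N ->
  exec prog f s = Some s'.
Proof.
elim: k f s => [|k IH] f s.
  by rewrite run_0 => [[->]] st _; case: f => /=; rewrite st.
rewrite run_S; case e: (step prog s) => [s1|] //= h st.
case: f => [|f] //= kf.
by rewrite e; apply: IH.
Qed.

Definition reach (s s' : state R) (B : nat) := exists k, (k <= B)%N /\ run k s = Some s'.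

Lemma reach_trans s1 s2 s3 B1 B2 : reach s1 s2 B1 -> reach s2 s3 B2 -> reach s1 s3 (B1 + B2).
Proof.
move=> [k1 [h1 r1]] [k2 [h2 r2]]; exists (k1 + k2)%N; split; first lia.
by rewrite run_add r1.
Qed.

Lemma reach_mono s s' B B' : (B <= B')%N -> reach s s' B -> reach s s' B'.
Proof. by move=> h [k [hk r]]; exists k; split => //; lia. Qed.

Lemma reach_run k s s' : run k s = Some s' -> reach s s' k.
Proof. by move=> r; exists k. Qed.

Definition nsN' := nsN ns.

Record InvA (s : state R) (i : nat) : Prop := {
  a_pc : pc s = 3%N;
  a_n0 : nmem s 0 = m;
  a_n1 : nmem s 1 = i;
  a_nin : forall a, (3 <= a)%N -> nmem s a = init_nmem ns a;
  a_r0 : rmem s 0 = phi; a_r1 : rmem s 1 = mu; a_r2 : rmem s 2 = q;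
  a_r3 : rmem s 3 = (nsN' 0)%:R; a_r4 : rmem s 4 = (nsN' 1)%:R;
  a_rz : forall a, (6 <= a < 32)%N -> rmem s a = 0;
  a_rarr : forall j, (3 <= j < i)%N -> rmem s (32 * j)%N = (nsN' j.-1)%:R }.


Ltac decide_nat :=
  repeat match goal with
  | |- context [ (?a < ?b)%N ] =>
      first [ rewrite (_ : (a < b)%N = true); last by apply/idP; lia
            | rewrite (_ : (a < b)%N = false); last by apply: negbTE; apply/negP; lia ]
  | |- context [ (?a == ?b :> nat) ] =>
      first [ rewrite (_ : (a == b :> nat) = true); last by apply/eqP; lia
            | rewrite (_ : (a == b :> nat) = false); last by apply: negbTE; apply/eqP; lia ]
  end.

Lemma A_body s i : InvA s i -> (i <= m)%N -> (3 <= i)%N ->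
  exists s', run 9 s = Some s' /\ InvA s' i.+1.
Proof.
case: s => pc0 N Rm [/= -> h0 h1 hin r0 r1 r2 r3 r4 rz rarr] him hi3.
eexists; split.
  do 9 (rewrite run_S /= /updN /updR /=; decide_nat; rewrite ?h0 ?h1).
  rewrite run_0; reflexivity.
have Ni := hin i hi3.
split => /=; rewrite ?h1.
- by [].
- by rewrite h0.
- by rewrite addn1.
- move=> a Ha; decide_nat; by apply: hin.
- decide_nat; by rewrite r0.
- decide_nat; by rewrite r1.
- decide_nat; by rewrite r2.
- decide_nat; by rewrite r3.
- decide_nat; by rewrite r4.
- move=> a Ha; decide_nat; by apply: rz.
- move=> j Hj; case: (eqVneq j i) => [->|ji].
  + rewrite eqxx Ni /init_nmem; decide_nat.
    by [].
  + decide_nat; apply: rarr; lia.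
Qed.

Lemma A_loop d : forall s i, (i + d = m.+1)%N -> (3 <= i)%N -> InvA s i ->
  exists s', reach s s' (9 * d) /\ InvA s' m.+1.
Proof.
elim: d => [|d IH] s i hid hi inv.
  by exists s; split; [exists 0%N | rewrite addn0 in hid; rewrite -hid].
have [s1 [r1 inv1]] := A_body inv ltac:(lia) hi.
have [s2 [r2 inv2]] := IH s1 i.+1 ltac:(lia) ltac:(lia) inv1.
exists s2; split => //.
by rewrite mulnSr addnC; apply: reach_trans r2; apply: reach_run.
Qed.

Definition nT := (\sum_(i < m) ns i)%N.

Record InvB (s : state R) (k : nat) : Prop := {
  b_pc : pc s = 21%N;
  b_n0 : nmem s 0 = m;
  b_n1 : nmem s 1 = k;
  b_n3 : nmem s 3 = 1%N;
  b_n4 : nmem s 4 = 0%N;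
  b_n5 : nmem s 5 = 32%N;
  b_nz : forall a, (m < a)%N -> nmem s (32 * a)%N = 0%N;
  b_r0 : rmem s 0 = phi; b_r1 : rmem s 1 = mu;
  b_r7 : rmem s 7 = (\sum_(0 <= j < k) nsN' j)%N%:R;
  b_r8 : rmem s 8 = 1; b_r10 : rmem s 10 = 0;
  b_r16 : rmem s 16 = qb q; b_r17 : rmem s 17 = phi * qb q;
  b_r24 : rmem s 24 = 0;
  b_ns : forall j, (j < m)%N -> rmem s (32 * (j + 1))%N = (nsN' j)%:R;
  b_km : (k <= m)%N }.

Lemma init_big a : (m < a)%N -> init_nmem ns a = 0%N.
Proof.
move=> h; rewrite /init_nmem; case: eqP => [E|_]; first by move: h; rewrite E.
by rewrite insubF //; apply/negbTE; rewrite -leqNgt; lia.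
Qed.

Lemma A_exit s : (2 <= m)%N -> InvA s m.+1 -> exists s', run 10 s = Some s' /\ InvB s' 0.
Proof.
move=> m2; case: s => pc0 N Rm [/= -> h0 h1 hin r0 r1 r2 r3 r4 rz rarr].
eexists; split.
  do 10 (rewrite run_S /= /updN /updR /=; decide_nat; rewrite ?h0 ?h1).
  rewrite run_0; reflexivity.
split => /=.
- by [].
- by rewrite h0.
- by [].
- by [].
- by [].
- by [].
- move=> a Ha; decide_nat; rewrite hin; [apply: init_big; lia | lia].
- by rewrite r0.
- by rewrite r1.
- by rewrite rz // big_geq.
- by [].
- by rewrite rz.
- by rewrite /qb r2.
- by rewrite /qb r0 r2.
- by rewrite rz.
- case=> [|[|j]] hj /=.
  + by rewrite r3 rz // addr0.
  + by rewrite r4 rz // addr0.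
  + decide_nat; rewrite rarr; last by lia.
    by rewrite addn1.
- by [].
Qed.

Lemma B_body s k : InvB s k -> (k < m)%N -> exists s', run 7 s = Some s' /\ InvB s' k.+1.
Proof.
case: s => pc0 N Rm [/= -> h0 h1 h3 h4 h5 nz r0 r1 r7 r8 r10 r16 r17 r24 hns hkm] hk.
eexists; split.
  do 7 (rewrite run_S /= /updN /updR /=; decide_nat; rewrite ?h0 ?h1).
  rewrite run_0; reflexivity.
split => /=; rewrite ?h1 ?h3 ?h5.
- by [].
- by rewrite ?h0.
- by rewrite ?addn1.
- by rewrite ?h3.
- by rewrite ?h4.
- by rewrite ?h5.
- move=> a Ha; decide_nat; exact: nz.
- by rewrite ?r0.
- by rewrite ?r1.
- rewrite r7 big_nat_recr //= natrD; congr (_ + _).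
  by rewrite mulnC hns.
- by rewrite ?r8.
- by rewrite ?r10.
- by rewrite ?r16.
- by rewrite ?r17.
- by rewrite ?r24.
- move=> j hj; decide_nat; exact: hns.
- by [].
Qed.

Lemma B_loop d : forall s k, (k + d = m)%N -> InvB s k ->
  exists s', reach s s' (7 * d) /\ InvB s' m.
Proof.
elim: d => [|d IH] s k hkd inv.
  by exists s; split; [exists 0%N | rewrite addn0 in hkd; rewrite -hkd].
have [s1 [r1 inv1]] := B_body inv ltac:(lia).
have [s2 [r2 inv2]] := IH s1 k.+1 ltac:(lia) inv1.
exists s2; split => //.
by rewrite mulnSr addnC; apply: reach_trans r2; apply: reach_run.
Qed.

Definition dd k y := dN ns phi mu q k y.
Definition GI (x : nat -> nat) :=
  forall i j : 'I_m, (0 < x i)%N -> dd j (x j) <= dd i (x i).-1.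

Record MemC (s : state R) (x : nat -> nat) (t : nat) : Prop := {
  c_n0 : nmem s 0 = m; c_n3 : nmem s 3 = 1%N; c_n4 : nmem s 4 = 0%N; c_n5 : nmem s 5 = 32%N;
  c_U : forall i, (i < m)%N -> nmem s (32 * (m + 1 + i))%N = minn (x i) (nsN' i);
  c_V : forall i, (i < m)%N -> nmem s (32 * (2 * m + 1 + i))%N = (x i - nsN' i)%N;
  c_r0 : rmem s 0 = phi; c_r1 : rmem s 1 = mu;
  c_r7 : rmem s 7 = nT%:R; c_r8 : rmem s 8 = 1; c_r10 : rmem s 10 = t%:R;
  c_r16 : rmem s 16 = qb q; c_r17 : rmem s 17 = phi * qb q; c_r24 : rmem s 24 = 0;
  c_ns : forall j, (j < m)%N -> rmem s (32 * (j + 1))%N = (nsN' j)%:R }.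

Record InvO (s : state R) (x : nat -> nat) (t : nat) : Prop := {
  o_pc : pc s = 29%N; o_mem : MemC s x t; o_t : (t <= nT)%N;
  o_sum : (\sum_(i < m) x i)%N = t; o_gi : GI x }.

Record InvI (s : state R) (x : nat -> nat) (t k b : nat) : Prop := {
  i_pc : pc s = 32%N; i_mem : MemC s x t; i_t : (t < nT)%N;
  i_sum : (\sum_(i < m) x i)%N = t; i_gi : GI x;
  i_n1 : nmem s 1 = k; i_km : (k <= m)%N;
  i_best : (0 < k)%N -> [/\ (b < k)%N, nmem s 6 = b, rmem s 11 = dd b (x b) &
                            forall j, (j < k)%N -> dd j (x j) <= rmem s 11] }.

Definition frameC (s s' : state R) :=
  (forall a, (a = 0 \/ a = 3 \/ a = 4 \/ a = 5 \/ 10 < a)%N -> nmem s' a = nmem s a) /\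
  (forall a, (a <= 10 \/ (15 <= a <= 17) \/ 24 <= a)%N -> rmem s' a = rmem s a).

Lemma frameC_trans s1 s2 s3 : frameC s1 s2 -> frameC s2 s3 -> frameC s1 s3.
Proof.
move=> [h1 h2] [h3 h4]; split => a Ha; [rewrite h3 // h1 // | rewrite h4 // h2 //].
Qed.

Lemma MemC_frame s s' x t : MemC s x t -> frameC s s' -> MemC s' x t.
Proof.
move=> [h0 h3 h4 h5 hU hV r0 r1 r7 r8 r10 r16 r17 r24 hns] [fN fR].
split.
- by rewrite fN //; lia.
- by rewrite fN //; lia.
- by rewrite fN //; lia.
- by rewrite fN //; lia.
- by move=> i hi; rewrite fN ?hU //; lia.
- by move=> i hi; rewrite fN ?hV //; lia.
- by rewrite fR //; lia.
- by rewrite fR //; lia.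
- by rewrite fR //; lia.
- by rewrite fR //; lia.
- by rewrite fR //; lia.
- by rewrite fR //; lia.
- by rewrite fR //; lia.
- by rewrite fR //; lia.
- by move=> j hj; rewrite fR ?hns //; lia.
Qed.

Lemma I_part1 s x t k b : (2 <= m)%N -> InvI s x t k b -> (k < m)%N ->
  exists s1, reach s s1 26 /\ pc s1 = 60%N /\ frameC s s1 /\ nmem s1 1 = k /\
    nmem s1 6 = nmem s 6 /\ rmem s1 11 = rmem s 11 /\ rmem s1 23 = dd k (x k).
Proof.
move=> m2; case: s => pc0 N Rm [/= -> [/= h0 h3 h4 h5 hU hV r0 r1 r7 r8 r10 r16 r17 r24 hns]
   _ _ _ h1 _ _] hk.
have eU : N ((m + k + 1) * 32)%N = minn (x k) (nsN' k).
  by rewrite -hU // mulnC; congr N; lia.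
have eV : N ((m + k + 1 + m) * 32)%N = (x k - nsN' k)%N.
  by rewrite -hV // mulnC; congr N; lia.
have en : Rm ((k + 1) * 32)%N = (nsN' k)%:R by rewrite mulnC hns.
case cU : ((minn (x k) (nsN' k))%:R < (nsN' k)%:R :> R).
- eexists; split.
    apply: reach_mono (_ : 25 <= 26)%N _ => //; apply: reach_run.
    do 25 (rewrite run_S /= /updN /updR /=; decide_nat; rewrite ?h0 ?h1 ?h3 ?h5 ?eU ?eV ?en ?cU ?r0 ?r1 ?r16).
    rewrite run_0; reflexivity.
  split; first by [].
  split; first by split => a Ha /=; decide_nat.
  split; first by [].
  split; first by [].
  split; first by [].
  by rewrite /= /dd /dN /gainM /fM /Tm cU.
- eexists; split.
    apply: reach_run.
    do 26 (rewrite run_S /= /updN /updR /=; decide_nat; rewrite ?h0 ?h1 ?h3 ?h5 ?eU ?eV ?en ?cU ?r0 ?r1 ?r16 ?r17).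
    rewrite run_0; reflexivity.
  split; first by [].
  split; first by split => a Ha /=; decide_nat.
  split; first by [].
  split; first by [].
  split; first by [].
  by rewrite /= /dd /dN /gainM /fM /Tm cU.
Qed.

Lemma I_body s x t k b : (2 <= m)%N -> InvI s x t k b -> (k < m)%N ->
  exists s' b', reach s s' 32 /\ InvI s' x t k.+1 b'.
Proof.
move=> m2 inv hk.
have [s1 [r1 [pc1 [fr [n1 [n6 [r11 r23]]]]]]] := I_part1 m2 inv hk.
case: inv => pc0 mem ht hsum hgi hn1 hkm hbest.
have mem1 := MemC_frame mem fr.
have n3 := c_n3 mem1; have n4 := c_n4 mem1; have r24 := c_r24 mem1.
move: s1 r1 pc1 fr n1 n6 r11 r23 mem1 n3 n4 r24 => [pc1' N Rm] r1 /= E fr n1 n6 r11 r23 mem1 n3 n4 r24.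
subst pc1'.
have fin : forall s' b', reach (State 60 N Rm) s' 6 -> frameC (State 60 N Rm) s' ->
    pc s' = 32%N -> nmem s' 1 = k.+1 ->
    ((0 < k.+1)%N -> [/\ (b' < k.+1)%N, nmem s' 6 = b', rmem s' 11 = dd b' (x b') &
                            forall j, (j < k.+1)%N -> dd j (x j) <= rmem s' 11]) ->
    exists s' b', reach s s' 32 /\ InvI s' x t k.+1 b'.
  move=> s' b' r2 fr2 pc2 n12 hb; exists s', b'; split.
    exact: reach_trans r1 r2.
  split => //.
  exact: MemC_frame mem1 fr2.
case: (posnP k) => [k0|kpos].
- apply: (fin _ k).
  + apply: reach_mono (_ : 5 <= 6)%N _ => //; apply: reach_run.
    do 5 (rewrite run_S /= /updN /updR /=; decide_nat; rewrite ?n1 ?n3 ?n4).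
    rewrite run_0; reflexivity.
  + by split => a Ha /=; decide_nat.
  + by [].
  + by rewrite /= ?n1 ?n3 ?addn1.
  + move=> _; split => /=.
    * by [].
    * by rewrite ?n1 ?n4 ?addn0.
    * by rewrite ?r23 ?r24 ?addr0.
    * move=> j hj; have -> : j = k by lia.
      by rewrite ?r23 ?r24 ?addr0.
- have [hb1 hb6 hb11 hball] := hbest kpos.
  case c : (Rm 11 < Rm 23).
  + apply: (fin _ k).
    * apply: reach_run.
      do 6 (rewrite run_S /= /updN /updR /=; decide_nat; rewrite ?n1 ?n3 ?n4 ?c).
      rewrite run_0; reflexivity.
    * by split => a Ha /=; decide_nat.
    * by [].
    * by rewrite /= ?n1 ?n3 ?addn1.
    * move=> _; split => /=.
      -- by [].
      -- by rewrite ?n1 ?n4 ?addn0.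
      -- by rewrite ?r23 ?r24 ?addr0.
      -- move=> j hj; rewrite ?r23 ?r24 ?addr0.
         case: (eqVneq j k) => [->//|jk].
         apply: le_trans (hball j ltac:(lia)) _; rewrite -r11.
         by apply: ltW; rewrite -r23.
  + apply: (fin _ b).
    * apply: reach_mono (_ : 5 <= 6)%N _ => //; apply: reach_run.
      do 5 (rewrite run_S /= /updN /updR /=; decide_nat; rewrite ?n1 ?n3 ?n4 ?c).
      rewrite run_0; reflexivity.
    * by split => a Ha /=; decide_nat.
    * by [].
    * by rewrite /= ?n1 ?n3 ?addn1.
    * move=> _; split => /=.
      -- lia.
      -- by rewrite n6.
      -- by rewrite r11.
      -- move=> j hj; case: (eqVneq j k) => [->|jk]; last first.
           by rewrite r11; apply: hball; lia.
         by rewrite -r23 leNgt c.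
Qed.

Lemma I_loop d : forall s x t k b, (2 <= m)%N -> (k + d = m)%N -> InvI s x t k b ->
  exists s' b', reach s s' (32 * d) /\ InvI s' x t m b'.
Proof.
elim: d => [|d IH] s x t k b m2 hkd inv.
  by exists s, b; split; [exists 0%N | rewrite addn0 in hkd; rewrite -hkd].
have [s1 [b1 [r1 inv1]]] := I_body m2 inv ltac:(lia).
have [s2 [b2 [r2 inv2]]] := IH s1 x t k.+1 b1 m2 ltac:(lia) inv1.
exists s2, b2; split => //.
by rewrite mulnSr addnC; exact: reach_trans r1 r2.
Qed.

Lemma O_enter s x t : InvO s x t -> (t < nT)%N -> exists s', reach s s' 2 /\ InvI s' x t 0 0.
Proof.
case: s => pc0 N Rm [/= -> mem ht hsum hgi] hlt.
have r7 := c_r7 mem; have r10 := c_r10 mem; move: r7 r10 => /= r7 r10.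
have c : (t%:R < nT%:R :> R) by rewrite ltr_nat.
eexists; split.
  apply: reach_run.
  do 2 (rewrite run_S /= /updN /updR /=; decide_nat; rewrite ?r7 ?r10 ?c).
  rewrite run_0; reflexivity.
split => //.
apply: MemC_frame mem _.
by split => a Ha /=; decide_nat.
Qed.

Definition xupd (x : nat -> nat) (b : nat) := fun i => if i == b then (x b).+1 else x i.

Hypotheses (phi_gt0 : 0 < phi) (mu_gt0 : 0 < mu) (q_ge0 : 0 <= q) (q_le1 : q <= 1) (m_ge2 : (2 <= m)%N).

Lemma GI_step x b : GI x -> (b < m)%N -> (forall j : 'I_m, dd j (x j) <= dd b (x b)) ->
  GI (xupd x b).
Proof.
move=> gi hb best i j; rewrite /xupd.
have dsucc := dN_succ ns phi_gt0 mu_gt0 q_ge0 q_le1.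
case: (eqVneq (val i) b) => [ib|ib]; case: (eqVneq (val j) b) => [jb|jb] /=.
- move=> _; rewrite jb ib /=; exact: dsucc.
- move=> _; rewrite ib /=; have := best j; by [].
- move=> xi; rewrite jb; apply: le_trans (dsucc _ _) _.
  have := gi i (Ordinal hb) xi; by [].
- exact: gi.
Qed.

Lemma O_after s x t b : InvI s x t m b -> exists s', reach s s' 19 /\ InvO s' (xupd x b) t.+1.
Proof.
case: s => pc0 N Rm [/= -> mem ht hsum hgi h1 _ hbest].
have m0 : (0 < m)%N by move: m_ge2; lia.
have [hb h6 h11 hall] := hbest m0.
case: mem => /= h0 h3 h4 h5 hU hV r0 r1 r7 r8 r10 r16 r17 r24 hns.
have eU : N ((m + b + 1) * 32)%N = minn (x b) (nsN' b).
  by rewrite -hU // mulnC; congr N; lia.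
have eV : N ((m + b + 1 + m) * 32)%N = (x b - nsN' b)%N.
  by rewrite -hV // mulnC; congr N; lia.
have en : Rm ((b + 1) * 32)%N = (nsN' b)%:R by rewrite mulnC hns.
have gi' : GI (xupd x b).
  apply: GI_step => // j; rewrite -h11; apply: hall; exact: ltn_ord.
have sum' : (\sum_(i < m) xupd x b i = t.+1)%N.
  rewrite (bigD1 (Ordinal hb)) //= /xupd eqxx -hsum [in RHS](bigD1 (Ordinal hb)) //=.
  rewrite addSn; congr (_.+1)%N; congr (_ + _)%N; apply: eq_bigr => i ib.
  by have -> : (val i == b) = false by apply/negbTE; apply: contra ib => /eqP e; apply/eqP/val_inj.
case cU : ((minn (x b) (nsN' b))%:R < (nsN' b)%:R :> R).
- have cU' : (x b < nsN' b)%N by move: cU; rewrite ltr_nat; lia.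
  eexists; split.
    apply: reach_mono (_ : 17 <= 19)%N _ => //; apply: reach_run.
    do 17 (rewrite run_S /= /updN /updR /=; decide_nat; rewrite ?h0 ?h1 ?h3 ?h5 ?h6 ?eU ?eV ?en ?cU ?r8 ?r10).
    rewrite run_0; reflexivity.
  split; [by [] | | by move: ht; lia | by [] | by []].
  split => /=.
  + decide_nat; by rewrite h0.
  + decide_nat; by rewrite h3.
  + decide_nat; by rewrite h4.
  + decide_nat; by rewrite h5.
  + move=> i hi; rewrite /xupd; case: (eqVneq i b) => [->|ib].
    * decide_nat; lia.
    * decide_nat; exact: hU.
  + move=> i hi; rewrite /xupd; case: (eqVneq i b) => [->|ib].
    * decide_nat; rewrite hV //; lia.
    * decide_nat; exact: hV.
  + by rewrite r0.
  + by rewrite r1.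
  + by rewrite r7.
  + by rewrite r8.
  + by rewrite ?r10 ?r8 natr1.
  + by rewrite r16.
  + by rewrite r17.
  + by rewrite r24.
  + move=> j hj; decide_nat; exact: hns.
- have cU' : (nsN' b <= x b)%N by move: cU; rewrite ltr_nat; lia.
  eexists; split.
    apply: reach_run.
    do 19 (rewrite run_S /= /updN /updR /=; decide_nat; rewrite ?h0 ?h1 ?h3 ?h5 ?h6 ?eU ?eV ?en ?cU ?r8 ?r10).
    rewrite run_0; reflexivity.
  split; [by [] | | by move: ht; lia | by [] | by []].
  split => /=.
  + decide_nat; by rewrite h0.
  + decide_nat; by rewrite h3.
  + decide_nat; by rewrite h4.
  + decide_nat; by rewrite h5.
  + move=> i hi; rewrite /xupd; case: (eqVneq i b) => [->|ib].
    * decide_nat; rewrite hU //; lia.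
    * decide_nat; exact: hU.
  + move=> i hi; rewrite /xupd; case: (eqVneq i b) => [->|ib].
    * decide_nat; lia.
    * decide_nat; exact: hV.
  + by rewrite r0.
  + by rewrite r1.
  + by rewrite r7.
  + by rewrite r8.
  + by rewrite ?r10 ?r8 natr1.
  + by rewrite r16.
  + by rewrite r17.
  + by rewrite r24.
  + move=> j hj; decide_nat; exact: hns.
Qed.

Lemma B_exit s : InvB s m -> exists s', reach s s' 2 /\ InvO s' (fun _ => 0%N) 0.
Proof.
case: s => pc0 N Rm [/= -> h0 h1 h3 h4 h5 nz r0 r1 r7 r8 r10 r16 r17 r24 hns _].
eexists; split.
  apply: reach_run.
  do 2 (rewrite run_S /= /updN /updR /=; decide_nat; rewrite ?h0 ?h1).
  rewrite run_0; reflexivity.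
split; [by [] | | by [] | by rewrite big1 | by move=> i j].
split => //=; try (move=> i hi; rewrite nz //; lia).
rewrite r7 /nT big_mkord; congr (_%:R); apply: eq_bigr => i _.
by rewrite /nsN' nsN_val.
Qed.

Lemma O_body s x t : InvO s x t -> (t < nT)%N ->
  exists s' x', reach s s' (2 + 32 * m + 19) /\ InvO s' x' t.+1.
Proof.
move=> inv ht.
have [s1 [r1 inv1]] := O_enter inv ht.
have [s2 [b2 [r2 inv2]]] := I_loop m_ge2 (add0n m) inv1.
have [s3 [r3 inv3]] := O_after inv2.
exists s3, (xupd x b2); split => //.
exact: reach_trans (reach_trans r1 r2) r3.
Qed.

Lemma O_loop d : forall s x t, (t + d = nT)%N -> InvO s x t ->
  exists s' x', reach s s' (d * (32 * m + 21)) /\ InvO s' x' nT.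
Proof.
elim: d => [|d IH] s x t htd inv.
  by exists s, x; split; [exists 0%N | rewrite addn0 in htd; rewrite -htd].
have [s1 [x1 [r1 inv1]]] := O_body inv ltac:(lia).
have [s2 [x2 [r2 inv2]]] := IH s1 x1 t.+1 ltac:(lia) inv1.
exists s2, x2; split => //.
rewrite mulSn; apply: reach_mono (reach_trans r1 r2); lia.
Qed.

Record InvD (s : state R) (x : nat -> nat) (a : nat) : Prop := {
  d_pc : pc s = 89%N;
  d_n0 : nmem s 0 = (m + m + (m + 1))%N;
  d_n1 : nmem s 1 = a;
  d_a : (m + 1 <= a <= m + m + (m + 1))%N;
  d_U : forall i, (i < m)%N -> nmem s (32 * (m + 1 + i))%N = minn (x i) (nsN' i);
  d_V : forall i, (i < m)%N -> nmem s (32 * (2 * m + 1 + i))%N = (x i - nsN' i)%N;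
  d_oU : forall i, (i < m)%N -> (m + 1 + i < a)%N -> nmem s (m + 1 + i) = minn (x i) (nsN' i);
  d_oV : forall i, (i < m)%N -> (2 * m + 1 + i < a)%N -> nmem s (2 * m + 1 + i) = (x i - nsN' i)%N }.

Lemma O_exit s x : InvO s x nT -> exists s', reach s s' 5 /\ InvD s' x (m + 1).
Proof.
case: s => pc0 N Rm [/= -> mem ht hsum hgi].
case: mem => /= h0 h3 h4 h5 hU hV r0 r1 r7 r8 r10 r16 r17 r24 hns.
have c : (nT%:R < nT%:R :> R) = false by rewrite ltxx.
eexists; split.
  apply: reach_run.
  do 5 (rewrite run_S /= /updN /updR /=; decide_nat; rewrite ?r7 ?r10 ?c ?h0 ?h3).
  rewrite run_0; reflexivity.
split => /=.
- by [].
- by [].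
- by [].
- move: m_ge2; lia.
- move=> i hi; decide_nat; exact: hU.
- move=> i hi; decide_nat; exact: hV.
- move=> i hi; lia.
- move=> i hi; lia.
Qed.

Lemma D_body s x a : InvD s x a -> (a < m + m + (m + 1))%N ->
  exists s', run 8 s = Some s' /\ InvD s' x a.+1.
Proof.
case: s => pc0 N Rm [/= -> h0 h1 ha hU hV oU oV] hlt.
eexists; split.
  do 8 (rewrite run_S /= /updN /updR /=; decide_nat; rewrite ?h0 ?h1).
  rewrite run_0; reflexivity.
split => /=.
- by [].
- decide_nat; by rewrite h0.
- by rewrite addn1.
- lia.
- move=> i hi; decide_nat; exact: hU.
- move=> i hi; decide_nat; exact: hV.
- move=> i hi hia; case: (eqVneq (m + 1 + i)%N a) => [E|E].
  + rewrite -E; decide_nat; exact: hU.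
  + decide_nat; apply: oU => //; lia.
- move=> i hi hia; case: (eqVneq (2 * m + 1 + i)%N a) => [E|E].
  + rewrite -E; decide_nat; exact: hV.
  + decide_nat; apply: oV => //; lia.
Qed.

Lemma D_loop d : forall s x a, (a + d = m + m + (m + 1))%N -> InvD s x a ->
  exists s', reach s s' (8 * d) /\ InvD s' x (m + m + (m + 1)).
Proof.
elim: d => [|d IH] s x a had inv.
  by exists s; split; [exists 0%N | rewrite addn0 in had; rewrite -had].
have [s1 [r1 inv1]] := D_body inv ltac:(lia).
have [s2 [r2 inv2]] := IH s1 x a.+1 ltac:(lia) inv1.
exists s2; split => //.
by rewrite mulnSr addnC; exact: reach_trans (reach_run r1) r2.
Qed.

Lemma D_exit s x : InvD s x (m + m + (m + 1)) ->
  exists s', run 1 s = Some s' /\ step prog s' = None /\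
   forall i, (i < m)%N -> nmem s' (m + 1 + i) = minn (x i) (nsN' i) /\
                          nmem s' (2 * m + 1 + i) = (x i - nsN' i)%N.
Proof.
case: s => pc0 N Rm [/= -> h0 h1 ha hU hV oU oV].
eexists; split.
  do 1 (rewrite run_S /= /updN /updR /=; decide_nat; rewrite ?h0 ?h1).
  rewrite run_0; reflexivity.
split; first by [].
move=> i hi; split; [apply: oU | apply: oV] => //; lia.
Qed.

Lemma A_start : exists s, run 3 (init_state ns phi mu q) = Some s /\ InvA s 3.
Proof.
eexists; split.
  do 3 (rewrite run_S /= /updN /updR /=; decide_nat).
  rewrite run_0; reflexivity.
split => /=.
- by [].
- by [].
- by [].
- move=> a Ha; decide_nat; by [].
- by [].
- by [].
- by [].
- by [].
- by [].
- move=> a Ha; decide_nat; rewrite /init_rmem; decide_nat; by [].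
- move=> j Hj; lia.
Qed.

End Machine.

Theorem theorem1 :
  exists (P : seq instr) (C : nat),
  forall (R : realFieldType) (m : nat) (ns : 'I_m -> nat) (phi mu q : R),
    (2 <= m)%N ->
    (forall i j : 'I_m, (i < j)%N -> (ns j < ns i)%N) ->
    0 < phi -> 0 < mu -> 0 <= q <= 1 ->
    exists s' : state R,
      exec P (C * (m * (\sum_(i < m) ns i) ^ 2))%N (init_state ns phi mu q)
        = Some s' /\
      exists p : profile ns,
        optimal phi mu q p /\
        (forall i : 'I_m,
            nmem s' (m + 1 + i)%N = uu p i /\
            nmem s' (2 * m + 1 + i)%N = vv p i).
Proof.
exists prog, 200%N => R m ns phi mu q m2 hdec phi0 mu0 /andP [q0 q1].
have m0 : (0 < m)%N by lia.
have n1 : (1 <= nT ns)%N.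
  pose i0 : 'I_m := Ordinal m0; pose i1 : 'I_m := Ordinal m2.
  have h := hdec i0 i1 isT.
  rewrite /nT (bigD1 i0) //=; move: h; lia.
have [s0 [r0 inv0]] := A_start ns phi0 mu0 q0 q1 m2.
have [s1 [r1 inv1]] := @A_loop R m ns phi mu q (m - 2)%N s0 3 ltac:(lia) isT inv0.
have [s2 [r2 inv2]] := A_exit m2 inv1.
have [s3 [r3 inv3]] := @B_loop R m ns phi mu q m s2 0 (add0n m) inv2.
have [s4 [r4 inv4]] := B_exit phi0 mu0 q0 q1 m2 inv3.
have [s5 [x5 [r5 inv5]]] := @O_loop R m ns phi mu q phi0 mu0 q0 q1 m2 (nT ns) s4 _ 0 (add0n _) inv4.
have [s6 [r6 inv6]] := O_exit phi0 mu0 q0 q1 m2 inv5.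
have [s7 [r7 inv7]] := @D_loop R m ns phi mu q phi0 mu0 q0 q1 m2
   ((m + m + (m + 1)) - (m + 1))%N s6 x5 (m + 1)%N ltac:(lia) inv6.
have [s8 [r8 [st8 out8]]] := D_exit phi0 mu0 q0 q1 m2 inv7.
have rall := reach_trans (reach_trans (reach_trans (reach_trans (reach_trans (reach_trans
   (reach_trans (reach_trans (reach_run r0) r1) (reach_run r2)) r3) r4) r5) r6) r7) (reach_run r8).
case: rall => k [hk rk].
exists s8; split.
  apply: (exec_run rk st8).
  move: hk; rewrite -mulnn.
  move: n1; rewrite /nT; move: (\sum_(i < m) ns i)%N => n n1 hk.
  have nn : (n <= n * n)%N by rewrite leq_pmull.
  have e1 : (m * 1 <= m * (n * n))%N by apply: leq_mul => //; lia.
  have e2 : (m * n <= m * (n * n))%N by apply: leq_mul.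
  have e3 : (n * n <= m * (n * n))%N by rewrite leq_pmull.
  lia.
have sx : (\sum_(i < m) x5 i)%N = (\sum_(i < m) ns i)%N by rewrite (o_sum inv5).
have [p [opt hp]] := final_opt phi0 mu0 q0 q1 m0 sx (o_gi inv5).
exists p; split => // i.
have [o1 o2] := out8 i (ltn_ord i).
by rewrite o1 o2 /nsN' nsN_val (proj1 (hp i)) (proj2 (hp i)).
Qed.
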